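(* If $u_\beta$ has affine factor complexity, then $t_m=1$.
   Context: $\beta>1$ is a simple Parry number with $d_\beta(1)=t_1\cdots t_m$, $m\ge2$, nonnegative integer digits, $t_1\ge1$, $t_m\ge1$, satisfying the Parry condition ($t_i\cdots t_m0^\omega$ lexicographically strictly smaller than $t_1\cdots t_m0^\omega$ for $2\le i\le m$). $\varphi$ is the substitution on $\mathcal A=\{0,\dots,m-1\}$ with $\varphi(k)=0^{t_{k+1}}(k+1)$ for $0\le k\le m-2$, $\varphi(m-1)=0^{t_m}$, and $u_\beta=\lim_n\varphi^n(0)$ is its fixed point. Affine factor complexity means that the number $\mathcal C(n)$ of factors of $u_\beta$ of length $n$ equals $an+b$ for all $n\in\mathbb N$, for some constants $a,b$. *)

(* Defs.v *)
From Stdlib Require Import Reals.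
From mathcomp Require Import all_boot.
Set Implicit Arguments. Unset Strict Implicit. Unset Printing Implicit Defensive.

Definition renyiT (b x : R) : R := Rminus (Rmult b x) (IZR (Int_part (Rmult b x))).

(* d_beta(1) = t_1 ... t_m (finite): t_{i+1} = floor(beta T^i(1)) for i < m,
   and T^m(1) = 0 (so the expansion stops). Digits are 0-indexed in the list t. *)
Definition finite_dbeta1 (b : R) (t : seq nat) : Prop :=
  (forall i, i < size t ->
     INR (nth 0 t i) = IZR (Int_part (Rmult b (iter i (renyiT b) R1)))) /\
  iter (size t) (renyiT b) R1 = R0.

Fixpoint lexlt (s1 s2 : seq nat) : bool :=
  match s1, s2 with
  | x :: s1', y :: s2' => (x < y) || ((x == y) && lexlt s1' s2')
  | [::], _ :: _ => true
  | _, _ => false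
  end.

(* t_i ... t_m 0^omega <lex t_1 ... t_m 0^omega for 2 <= i <= m.  Both infinite
   words are 0 beyond position m, so it suffices to compare the first m letters:
   (drop (i-1) t ++ 0^(i-1)) versus t; here k = i-1 ranges over 1..m-1. *)
Definition parry_condition (t : seq nat) : Prop :=
  forall k, 1 <= k < size t -> lexlt (drop k t ++ nseq k 0) t.

Definition phi (t : seq nat) (k : nat) : seq nat :=
  if k.+1 < size t then nseq (nth 0 t k) 0 ++ [:: k.+1]
  else nseq (nth 0 t k) 0.

Definition phiw (t : seq nat) (w : seq nat) : seq nat := flatten (map (phi t) w).

Definition phin (t : seq nat) (n : nat) : seq nat := iter n (phiw t) [:: 0].

(* u is the infinite word lim_n phi^n(0): every phi^n(0) is a prefix of u and
   the prefixes phi^n(0) exhaust u. *)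
Definition is_fixed_point_limit (t : seq nat) (u : nat -> nat) : Prop :=
  (forall n i, i < size (phin t n) -> u i = nth 0 (phin t n) i) /\
  (forall i, exists n, i < size (phin t n)).

Definition is_factor (u : nat -> nat) (w : seq nat) : Prop :=
  exists i, w = mkseq (fun j => u (i + j)) (size w).

Definition factor_complexity (u : nat -> nat) (n c : nat) : Prop :=
  exists s : seq (seq nat), uniq s /\ size s = c /\
    forall w, w \in s <-> (size w = n /\ is_factor u w).

Definition affine_complexity (u : nat -> nat) : Prop :=
  exists a b : R, forall n, exists c,
    factor_complexity u n c /\ INR c = Rplus (Rmult a (INR n)) b.

(* Main.v *)
Require Import Defs.
From Stdlib Require Import Reals.
From mathcomp Require Import all_boot.
From mathcomp Require Import zify.

Definition Fw (t w : seq nat) : Prop := exists n, infix w (phin t n).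

Lemma phiw_cat t a b : phiw t (a ++ b) = phiw t a ++ phiw t b.
Proof. by rewrite /phiw map_cat flatten_cat. Qed.

Lemma infix_phiw t a b : infix a b -> infix (phiw t a) (phiw t b).
Proof.
move=> /infixP [p [q ->]]; rewrite !phiw_cat; exact: infix_infix.
Qed.

Lemma Fw_phiw t w : Fw t w -> Fw t (phiw t w).
Proof. by move=> [n Hn]; exists n.+1; exact: infix_phiw. Qed.

Lemma Fw_sub t v w : infix v w -> Fw t w -> Fw t v.
Proof. by move=> Hvw [n Hn]; exists n; exact: infix_trans Hn. Qed.

Lemma iter_phiw_cat t n a b :
  iter n (phiw t) (a ++ b) = iter n (phiw t) a ++ iter n (phiw t) b.
Proof. by elim: n => //= n ->; rewrite phiw_cat. Qed.

Lemma phi0E t : 1 < size t -> phi t 0 = nseq (nth 0 t 0) 0 ++ [:: 1].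
Proof. by rewrite /phi => ->. Qed.

Lemma phin_dec t n : 1 < size t -> 2 <= nth 0 t 0 ->
  exists r, phin t n.+1 = phin t n ++ phin t n ++ r.
Proof.
move=> Hs HT.
have E : phiw t [:: 0] = [:: 0] ++ [:: 0] ++ (nseq (nth 0 t 0 - 2) 0 ++ [:: 1]).
  rewrite /phiw /= cats0 phi0E //.
  by move: HT; case: (nth 0 t 0) => [|[|T']] //= _; rewrite !subSS subn0.
exists (iter n (phiw t) (nseq (nth 0 t 0 - 2) 0 ++ [:: 1])).
by rewrite /phin iterSr E !iter_phiw_cat.
Qed.

Lemma phin_pref t n : 1 < size t -> 2 <= nth 0 t 0 ->
  exists r, phin t n.+1 = nseq (nth 0 t 0) 0 ++ 1 :: r.
Proof.
move=> Hs HT; elim: n => [|n [r IH]].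
  by exists [::]; rewrite /phin /= /phiw /= cats0 phi0E.
have [r' ->] := phin_dec t n.+1 Hs HT.
by exists (r ++ phin t n.+1 ++ r'); rewrite {1}IH -catA.
Qed.

Lemma phin_size t n : 1 < size t -> 2 <= nth 0 t 0 -> 0 < size (phin t n).
Proof.
move=> Hs HT; elim: n => [//|n IH].
have [r ->] := phin_dec t n Hs HT; rewrite size_cat; lia.
Qed.

Lemma phin_letters t n : 0 < size t -> all (fun x => x < size t) (phin t n).
Proof.
move=> Hs; elim: n => [/=|n IH]; first by rewrite Hs.
rewrite /phin iterS -/(phin t n) /phiw.
elim: (phin t n) IH => //= a s IHs /andP [Ha Hs'].
rewrite all_cat IHs // andbT /phi.
case: ifP => H; rewrite ?all_cat all_nseq Hs ?orbT //=.
by rewrite H.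
Qed.

Lemma phin_mono t n k : 1 < size t -> 2 <= nth 0 t 0 -> size (phin t n) <= size (phin t (k + n)).
Proof.
move=> Hs HT; elim: k => // k IH; rewrite addSn.
have [r ->] := phin_dec t (k + n) Hs HT; rewrite !size_cat; lia.
Qed.

Lemma factor_Fw t u w : 1 < size t -> 2 <= nth 0 t 0 -> is_fixed_point_limit t u ->
  (is_factor u w <-> Fw t w).
Proof.
move=> Hs HT [H1 H2]; split.
- move=> [i Hw].
  have [n Hn] := H2 (i + size w).
  exists n; apply/infixP.
  exists (take i (phin t n)), (drop (size w) (drop i (phin t n))).
  have -> : w = take (size w) (drop i (phin t n)).
    apply: (@eq_from_nth _ 0).
      rewrite size_take size_drop; case: ifP => //; lia.
    move=> j Hj; rewrite [in LHS]Hw nth_mkseq // nth_take // nth_drop.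
    apply: H1; lia.
  rewrite size_takel ?size_drop; last lia.
  by rewrite !cat_take_drop.
- move=> [n /infixP [p [q Hpq]]]; exists (size p).
  apply: (@eq_from_nth _ 0); first by rewrite size_mkseq.
  move=> j Hj; rewrite nth_mkseq // (H1 n); last first.
    by rewrite Hpq !size_cat ltn_add2l; apply: (leq_trans Hj); exact: leq_addr.
  by rewrite Hpq nth_cat ltnNge leq_addr /= addKn nth_cat Hj.
Qed.

Lemma Fw_left t w : 1 < size t -> 2 <= nth 0 t 0 -> Fw t w -> exists x, Fw t (x :: w).
Proof.
move=> Hs HT [n /infixP [p [q Hpq]]].
have [r Hr] := phin_dec t n Hs HT.
have Hz : 0 < size (phin t n ++ p) by rewrite size_cat; have := phin_size t n Hs HT; lia.
have [s [x E]] : exists s x, phin t n ++ p = rcons s x.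
  move: Hz; case/lastP: (phin t n ++ p) => [|s x] //= _; by exists s, x.
exists x, n.+1; apply/infixP; exists s, (q ++ r).
by rewrite Hr {2}Hpq !catA E -cats1 -(catA s [:: x] w).
Qed.

Lemma Fw_sub' t v w : Fw t w -> infix v w -> Fw t v.
Proof. by move=> H1 H2; exact: Fw_sub H2 H1. Qed.
Arguments Fw_sub' {t v w}.
Arguments Fw_phiw {t w}.

Lemma phiw2 t y : phiw t [:: y; 0] = phi t y ++ phi t 0 ++ [::].
Proof. by []. Qed.

Lemma phi_lt t y : y.+1 < size t -> phi t y = nseq (nth 0 t y) 0 ++ [:: y.+1].
Proof. by rewrite /phi => ->. Qed.

Lemma phi_last t : 0 < size t -> phi t (size t).-1 = nseq (nth 0 t (size t).-1) 0.
Proof. by move=> H; rewrite /phi prednK // ltnn. Qed.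

Section F.
Variables (t : seq nat).
Hypothesis Hs : 1 < size t.
Hypothesis HT : 2 <= nth 0 t 0.
Hypothesis Htm : 2 <= nth 0 t (size t).-1.

Lemma F1 y : y < size t -> Fw t [:: y; 0].
Proof.
elim: y => [_|y IH Hy].
  exists 1; rewrite /phin /= /phiw /= cats0 phi0E //.
  move: HT; case: (nth 0 t 0) => [|[|T']] //= _.
  exact: (prefix_infix [:: 0; 0]).
apply: (Fw_sub' (Fw_phiw (IH (ltnW Hy)))).
rewrite phiw2 phi_lt // phi0E //.
rewrite -catA; apply: infix_catl.
move: HT; case: (nth 0 t 0) => [|[|T']] //= _.
by rewrite eqxx.
Qed.

Definition w1 := nseq (nth 0 t 0) 0 ++ [:: 1].
Definition w2 := nseq (nth 0 t 0).+1 0.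

Lemma F2 k : k < size t -> Fw t (k :: w1).
Proof.
case: k => [_|k Hk].
  have H := F1 (size t).-1 (ltac:(lia) : (size t).-1 < size t).
  apply: (Fw_sub' (Fw_phiw H)).
  rewrite phiw2 phi_last ?phi0E; try lia.
  rewrite cats0 -(subnK (ltnW Htm)) nseqD -catA.
  apply: infix_catl; exact: infix_refl.
have H := F1 k (ltnW Hk).
apply: (Fw_sub' (Fw_phiw H)).
rewrite phiw2 phi_lt // phi0E //.
rewrite cats0 -catA; apply: infix_catl; exact: infix_refl.
Qed.

Lemma F3 : Fw t (0 :: w2).
Proof.
have H := F1 (size t).-1 (ltac:(lia) : (size t).-1 < size t).
apply: (Fw_sub' (Fw_phiw H)).
rewrite phiw2 phi_last ?phi0E; try lia.
rewrite cats0 -(subnK Htm) nseqD -catA /w2.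
apply: infix_catl.
exact: (prefix_infix (0 :: 0 :: nseq (nth 0 t 0) 0)).
Qed.

End F.

Lemma nopre T q : prefix (nseq T 0 ++ [:: 1]) (nseq T.+1 0 ++ q) = false.
Proof. by elim: T => //= T ->; rewrite andbF. Qed.

Lemma nseq_shift n q : 0 :: nseq n 0 ++ q = nseq n 0 ++ 0 :: q.
Proof. by elim: n => //= n ->. Qed.

Lemma run_left T (v p q : seq nat) : v = p ++ nseq T.+1 0 ++ q ->
  prefix (nseq T 0 ++ [:: 1]) v -> exists x, x != 0 /\ infix (x :: nseq T.+1 0) v.
Proof.
elim/last_ind: p q => [|p y IH] q Hv Hpre.
  by rewrite Hv nopre in Hpre.
case: (eqVneq y 0) => [Ey|Ny].
  apply: (IH (0 :: q)) => //.
  rewrite Hv -cats1 Ey -catA /=; congr (_ ++ _).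
  by rewrite -[0 :: nseq T 0 ++ 0 :: q]/(0 :: (nseq T 0 ++ 0 :: q)) -nseq_shift.
exists y; split => //; apply/infixP; exists p, q.
by rewrite Hv -cats1 -catA.
Qed.

Lemma F4 t : 1 < size t -> 2 <= nth 0 t 0 -> 2 <= nth 0 t (size t).-1 ->
  exists x, x != 0 /\ Fw t (x :: w2 t).
Proof.
move=> Hs HT Htm.
have [n Hn] := F3 t Hs HT Htm.
have [r Hr] := phin_dec t n Hs HT.
have Hn' : infix (w2 t) (phin t n.+1).
  rewrite Hr; apply: infix_catr; exact: (catl_infix (s := [:: 0])).
have [r' Hr'] := phin_pref t n Hs HT.
move/infixP: Hn' => [p [q Hpq]].
have Hpre : prefix (nseq (nth 0 t 0) 0 ++ [:: 1]) (phin t n.+1).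
  by rewrite Hr' -(cat1s 1 r') catA; exact: prefix_prefix.
have [x [Hx Hinf]] := run_left (nth 0 t 0) _ _ _ Hpq Hpre.
by exists x; split => //; exists n.+1.
Qed.

Lemma count_lemma (X E Y B : seq (seq nat)) (f : seq nat -> seq nat) :
  uniq X -> uniq E -> {subset E <= X} -> uniq Y -> {subset Y <= map f X} ->
  {subset map f E <= B} -> size Y + size E <= size X + size B.
Proof.
move=> uX uE sEX uY sY sB.
set R := filter (predC (mem E)) X.
have h1 : size Y <= size (B ++ map f R).
  apply: uniq_leq_size uY _ => y /sY /mapP [x Hx ->]; rewrite mem_cat.
  case: (boolP (x \in E)) => HxE.
  - by rewrite sB // map_f.
  - by rewrite map_f ?orbT // mem_filter /= HxE.
have h2 : size E <= count (mem E) X.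
  rewrite -size_filter; apply: uniq_leq_size uE _ => x Hx.
  by rewrite mem_filter /= Hx sEX.
have h3 := count_predC (mem E) X.
rewrite size_cat size_map size_filter in h1.
by apply: (leq_trans (leq_add h1 h2)); rewrite -h3 addnC addnA addnAC.
Qed.

Lemma parry_last t : 2 <= size t -> parry_condition t -> last 0 t <= nth 0 t 0.
Proof.
case/lastP: t => [|s x] //; rewrite size_rcons => Hs Hp.
have := Hp (size s); rewrite size_rcons leqnn -cats1 drop_size_cat // last_cat /=.
case: s Hs {Hp} => [|a s] //= _ H.
have {H} := H (ltac:(by [])).
by case/orP => [/ltnW //|/andP [/eqP -> _]].
Qed.

Lemma size1 (w : seq nat) : size w = 1 -> w = [:: head 0 w].
Proof. by case: w => [|x [|]]. Qed.

Theorem corollary4 (beta : R) (t : seq nat) (u : nat -> nat) :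
  Rlt R1 beta ->
  2 <= size t ->
  1 <= nth 0 t 0 ->
  1 <= last 0 t ->
  finite_dbeta1 beta t ->
  parry_condition t ->
  is_fixed_point_limit t u ->
  affine_complexity u ->
  last 0 t = 1.
Proof.
move=> Hb Hs HT1 Htm1 Hd Hparry Hfix [a [b Haff]].
have [->|Hne] := eqVneq (last 0 t) 1; first done.
exfalso.
have HtmT := parry_last t Hs Hparry.
have Hlast : nth 0 t (size t).-1 = last 0 t by rewrite nth_last.
have Htm : 2 <= nth 0 t (size t).-1 by rewrite Hlast; lia.
have HT : 2 <= nth 0 t 0 by lia.
have Hs' : 1 < size t by [].
set T := nth 0 t 0 in HT HtmT.
have FE := fun w => factor_Fw t u w Hs' HT Hfix.
have [c0 [[s0 [u0 [z0 m0]]] e0]] := Haff 0.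
have [c1 [[s1 [u1 [z1 m1]]] e1]] := Haff 1.
have [cN [[sN [uN [zN mN]]] eN]] := Haff T.+1.
have [cN1 [[sN1 [uN1 [zN1 mN1]]] eN1]] := Haff T.+2.
have H0 : 1 <= c0.
  rewrite -z0; apply: (uniq_leq_size (s1 := [:: [::]])) => // w; rewrite inE => /eqP ->.
  by apply/m0; split => //; exists 0.
have H1 : c1 <= size t.
  rewrite -z1 -(size_map (head 0)) -(size_iota 0 (size t)).
  apply: uniq_leq_size.
    rewrite map_inj_in_uniq // => w w' /m1 [Hw _] /m1 [Hw' _] Heq.
    by rewrite (size1 w Hw) (size1 w' Hw') Heq.
  move=> x /mapP [w /m1 [Hw Hf] ->].
  have [n Hn] := (FE w).1 Hf.
  rewrite (size1 w Hw) infix1s in Hn.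
  have := allP (phin_letters t n (ltnW Hs')) _ Hn.
  by rewrite mem_iota.
have [x [Hx0 Hx]] := F4 t Hs' HT Htm.
set E := map (fun k => k :: w1 t) (iota 0 (size t)) ++ [:: 0 :: w2 t; x :: w2 t].
have Hw1 : size (w1 t) = T.+1 by rewrite /w1 size_cat size_nseq addn1.
have Hw2 : size (w2 t) = T.+1 by rewrite /w2 size_nseq.
have Hcnt := count_lemma sN1 E sN [:: w1 t; w2 t] behead.
have Hw12 : w1 t != w2 t.
  apply/negP => /eqP H.
  have : 1 \in w2 t by rewrite -H /w1 mem_cat mem_seq1 eqxx orbT.
  by rewrite /w2 mem_nseq.
have uE : uniq E.
  rewrite cat_uniq map_inj_uniq ?iota_uniq; last by move=> ? ? [].
  have nm : forall y, y :: w2 t \notin map (fun k => k :: w1 t) (iota 0 (size t)).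
    by move=> y; apply/mapP => [[k _ [_ E']]]; move: Hw12; rewrite E' eqxx.
  by rewrite /= inE !(negbTE (nm _)) /= eqseq_cons eq_sym (negbTE Hx0).
have sE : {subset E <= sN1}.
  move=> e; rewrite mem_cat => /orP [/mapP [k Hk ->]|].
    apply/mN1; split; first by rewrite /= Hw1.
    by apply/FE; apply: F2 => //; rewrite mem_iota in Hk.
  rewrite !inE => /orP [] /eqP ->; apply/mN1; (split; first by rewrite /= size_nseq); apply/FE.
    exact: F3.
  exact: Hx.
have sY : {subset sN <= map behead sN1}.
  move=> w /mN [Hw Hf].
  have [y Hy] := Fw_left t w Hs' HT ((FE w).1 Hf).
  apply/mapP; exists (y :: w) => //; apply/mN1; split; first by rewrite /= Hw.
  exact/FE.
have sB : {subset map behead E <= [:: w1 t; w2 t]}.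
  move=> w /mapP [e]; rewrite mem_cat => /orP [/mapP [k _ ->] ->|].
    by rewrite inE eqxx.
  by rewrite !inE => /orP [] /eqP -> -> ; rewrite eqxx ?orbT.
have {Hcnt} Hcnt := Hcnt uN1 uE sE uN sY sB.
rewrite size_cat size_map size_iota zN zN1 /= in Hcnt.
have Hr : INR (Nat.add cN1 c0) = INR (Nat.add cN c1).
  rewrite !plus_INR e0 e1 eN eN1 (S_INR T.+1).
  change (INR 0) with R0; change (INR 1) with R1; ring.
have Heq : (cN1 + c0 = cN + c1)%N by apply: INR_eq.
lia.
Qed.
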